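(* Let $1\le k<n$. Let $G$ be a simple graph on $n$ vertices (identified with its $n\times n$ binary adjacency matrix, with graph state $|G\rangle$ on $n$ qubits), and let $\Gamma$ be a $k\times n$ binary matrix. Define the linear map $\mathcal{E}_{G,\Gamma}:(\mathbb{C}^2)^{\otimes k}\to(\mathbb{C}^2)^{\otimes n}$ by $\mathcal{E}_{G,\Gamma}|x\rangle = Z^{x\Gamma}|G\rangle$ for $x\in\mathbb{F}_2^k$ (row vector, $x\Gamma\in\mathbb{F}_2^n$ computed mod 2, $Z^{c}=\bigotimes_j Z^{c_j}$); this is the linear map of the graph-like ZX-diagram with $k$ input Z-spiders, $n$ output Z-spiders, Hadamard edges between inputs and outputs given by the bi-adjacency matrix $\Gamma$ and Hadamard edges among outputs given by $G$. Let $C$ be any $k$-qubit Clifford unitary and $L_c$ any tensor product of $n$ single-qubit Clifford unitaries, and set $\mathcal{E}=L_c\,\mathcal{E}_{G,\Gamma}\,C$. Then $\mathcal{E}$ is a valid stabilizer encoder (i.e., up to a nonzero scalar it is an isometry, mapping distinct input basis states to distinct orthonormal encoded states, whose image is the $2^k$-dimensional codespace of an $[[n,k]]$ stabilizer code) if and only if $\Gamma$ has rank $k$ over $\mathbb{F}_2$.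
   Context: The graph state is $|G\rangle=\prod_{(u,v)\in E(G)}\mathrm{CZ}_{u,v}|+\rangle^{\otimes n}$. An $[[n,k]]$ stabilizer code's codespace is the common $+1$ eigenspace of an abelian subgroup of the $n$-qubit Pauli group not containing $-I$, generated by $n-k$ independent elements. The Clifford group is the normalizer of the Pauli group in the unitary group. *)

(* Defs.v *)
From mathcomp Require Import all_boot all_order all_algebra.
From mathcomp Require Import algC.
Unset Printing Implicit Defensive.
Import GRing.Theory Num.Theory.
Local Open Scope ring_scope.

(* Computational basis of n qubits: indices i : 'I_(2^n); qubit j of the
   basis state i is the j-th binary digit of i. *)
Definition bit {n : nat} (i : 'I_(2 ^ n)) (j : 'I_n) : bool := odd (i %/ 2 ^ j).
Definition bitord {n : nat} (i : 'I_(2 ^ n)) (j : 'I_n) : 'I_2 := inord (bit i j).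

Definition bits_rv {k : nat} (x : 'I_(2 ^ k)) : 'rV['F_2]_k :=
  \row_j (bit x j)%:R.

Definition tens {n : nat} (U : 'I_n -> 'M[algC]_2) : 'M[algC]_(2 ^ n) :=
  \matrix_(a, b) \prod_(j < n) U j (bitord a j) (bitord b j).

Definition adjmx {m p : nat} (A : 'M[algC]_(m, p)) : 'M[algC]_(p, m) :=
  (map_mx Num.conj A)^T.

Definition unitary {m : nat} (U : 'M[algC]_m) : Prop := adjmx U *m U = 1%:M.

Definition Xm : 'M[algC]_2 := \matrix_(i, j) (i != j)%:R.
Definition Zm : 'M[algC]_2 := \matrix_(i, j) ((i == j)%:R * (-1) ^+ i).
Definition Ym : 'M[algC]_2 := 'i *: (Xm *m Zm).

Definition pauli1 (P : 'M[algC]_2) : Prop :=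
  P = 1%:M \/ P = Xm \/ P = Ym \/ P = Zm.

Definition pauli (n : nat) (P : 'M[algC]_(2 ^ n)) : Prop :=
  exists (c : nat) (Ps : 'I_n -> 'M[algC]_2),
    (forall j, pauli1 (Ps j)) /\ P = 'i ^+ c *: tens Ps.

Definition clifford (n : nat) (U : 'M[algC]_(2 ^ n)) : Prop :=
  unitary U /\
  forall P, pauli n P ->
    pauli n (U *m P *m adjmx U) /\ pauli n (adjmx U *m P *m U).

Definition Zpow {n : nat} (c : 'rV['F_2]_n) : 'M[algC]_(2 ^ n) :=
  tens (fun j => if c 0 j == 1 then Zm else 1%:M).

Definition CZ {n : nat} (u v : 'I_n) : 'M[algC]_(2 ^ n) :=
  \matrix_(a, b) ((a == b)%:R * (if bit a u && bit a v then -1 else 1)).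

Definition plus_state (n : nat) : 'cV[algC]_(2 ^ n) :=
  const_mx ((sqrtC 2) ^- n).

Definition simple_graph {n : nat} (G : 'M['F_2]_n) : Prop :=
  G^T = G /\ forall i, G i i = 0.

Definition graph_state {n : nat} (G : 'M['F_2]_n) : 'cV[algC]_(2 ^ n) :=
  (\prod_(u < n) \prod_(v < n | (u < v)%N && (G u v == 1)) CZ u v) *m plus_state n.

Definition enc {n k : nat} (G : 'M['F_2]_n) (Gam : 'M['F_2]_(k, n))
  : 'M[algC]_(2 ^ n, 2 ^ k) :=
  \matrix_(s, x) (Zpow (bits_rv x *m Gam) *m graph_state G) s 0.

(* Group generated by a list of (invertible, finite-order) Pauli matrices:
   all finite products of generators. *)
Definition gen_group {n : nat} (g : seq 'M[algC]_(2 ^ n)) (M : 'M[algC]_(2 ^ n)) : Prop :=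
  exists s : seq nat, all (fun i => (i < size g)%N) s /\
    M = \prod_(i <- s) g`_i.

Definition rem_nth {T : Type} (i : nat) (s : seq T) : seq T :=
  take i s ++ drop i.+1 s.

Definition stabilizer_gens (n k : nat) (g : seq 'M[algC]_(2 ^ n)) : Prop :=
  size g = (n - k)%N /\
  (forall i, (i < size g)%N -> pauli n g`_i) /\
  (forall i j, (i < size g)%N -> (j < size g)%N -> g`_i *m g`_j = g`_j *m g`_i) /\
  ~ gen_group g (- 1%:M) /\
  (forall i, (i < size g)%N -> ~ gen_group (rem_nth i g) g`_i).

Definition codespace {n : nat} (g : seq 'M[algC]_(2 ^ n)) (v : 'cV[algC]_(2 ^ n)) : Prop :=
  forall M, gen_group g M -> M *m v = v.

Definition valid_stabilizer_encoder (n k : nat) (E : 'M[algC]_(2 ^ n, 2 ^ k)) : Prop :=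
  (exists c : algC, c != 0 /\ adjmx (c *: E) *m (c *: E) = 1%:M) /\
  exists g, stabilizer_gens n k g /\
    forall v : 'cV[algC]_(2 ^ n), (exists x : 'cV[algC]_(2 ^ k), v = E *m x) <-> codespace g v.

(* Main.v *)
Require Import Defs.
From mathcomp Require Import all_boot all_order all_algebra.
From mathcomp Require Import algC.
From mathcomp Require Import ring.
Import GRing.Theory Num.Theory.
Local Open Scope ring_scope.
Set Implicit Arguments.
Unset Strict Implicit.


Lemma bits_eq_nat n a b : (a < 2^n)%N -> (b < 2^n)%N ->
  (forall j, (j < n)%N -> odd (a %/ 2^j)%N = odd (b %/ 2^j)%N) -> a = b.
Proof.
elim: n a b => [|n IH] a b.
  by rewrite expn0 !ltnS !leqn0 => /eqP-> /eqP->.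
move=> ha hb hj.
have h0 := hj 0%N isT; rewrite !expn0 !divn1 in h0.
have e : (a %/ 2 = b %/ 2)%N.
  apply: IH.
  - by rewrite ltn_divLR // -expnSr.
  - by rewrite ltn_divLR // -expnSr.
  move=> j hjn; rewrite -!divnMA -expnS; exact: hj.
by rewrite -[a]odd_double_half -[b]odd_double_half h0 -!divn2 e.
Qed.

Lemma bit_inj n (a b : 'I_(2^n)) : (forall j, bit a j = bit b j) -> a = b.
Proof.
move=> h; apply: val_inj; apply: (@bits_eq_nat n); [exact: ltn_ord|exact: ltn_ord|].
move=> j hj; exact: (h (Ordinal hj)).
Qed.

Lemma bitordE n (a : 'I_(2^n)) j : val (bitord a j) = bit a j.
Proof. by rewrite /bitord /= inordK //; case: (bit a j). Qed.

Lemma bitord_inj n (a b : 'I_(2^n)) : (forall j, bitord a j = bitord b j) -> a = b.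
Proof.
move=> h; apply: bit_inj => j; have := congr1 val (h j); rewrite !bitordE.
by case: (bit a j); case: (bit b j).
Qed.

Definition ffb n (a : 'I_(2^n)) : {ffun 'I_n -> 'I_2} := [ffun j => bitord a j].

Lemma ffb_bij n : bijective (@ffb n).
Proof.
apply: inj_card_bij.
  by move=> a b e; apply: bitord_inj => j; have := congr1 (fun f : {ffun 'I_n -> 'I_2} => f j) e; rewrite !ffunE.
by rewrite card_ffun !card_ord.
Qed.

Lemma sum_bits n (F : {ffun 'I_n -> 'I_2} -> algC) :
  \sum_(b : 'I_(2^n)) F (ffb b) = \sum_f F f.
Proof. by rewrite (reindex (@ffb n)) //; apply: onW_bij; exact: ffb_bij. Qed.

Lemma F2_cases (x : 'F_2) : x = 0 \/ x = 1.
Proof. by case: x => [[|[|m]] hm]; [left|right|]; try apply: val_inj. Qed.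

Lemma bits_rv_inj n : injective (@bits_rv n).
Proof.
move=> a b e; apply: bit_inj => j; have := congr1 (fun r : 'rV['F_2]_n => r 0 j) e; rewrite !mxE.
by case: (bit a j); case: (bit b j).
Qed.

Lemma bits_rv_bij n : bijective (@bits_rv n).
Proof.
apply: inj_card_bij; first exact: bits_rv_inj.
by rewrite card_mx card_Fp // card_ord mul1n.
Qed.

Definition idx n (r : 'rV['F_2]_n) : 'I_(2^n) :=
  odflt (Ordinal (ltac:(by rewrite expn_gt0) : (0 < 2^n)%N)) [pick a | bits_rv a == r].

Lemma idxK n (r : 'rV['F_2]_n) : bits_rv (idx r) = r.
Proof.
rewrite /idx; case: pickP => [a /eqP //|h].
have [g _ K] := bits_rv_bij n.
by have := h (g r); rewrite K eqxx.
Qed.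

Lemma bits_rvK n (a : 'I_(2^n)) : idx (bits_rv a) = a.
Proof. by apply: bits_rv_inj; rewrite idxK. Qed.

Lemma bits_rvE n (a : 'I_(2^n)) j : bits_rv a 0 j = (val (bitord a j))%:R.
Proof. by rewrite mxE bitordE. Qed.


Lemma tens_mul n (U V : 'I_n -> 'M[algC]_2) :
  tens U *m tens V = tens (fun j => U j *m V j).
Proof.
apply/matrixP => a c; rewrite !mxE.
under [RHS]eq_bigr do rewrite mxE.
rewrite bigA_distr_bigA /=.
rewrite -(sum_bits (fun f : {ffun 'I_n -> 'I_2} =>
   \prod_j (U j (bitord a j) (f j) * V j (f j) (bitord c j)))).
apply: eq_bigr => b _; rewrite !mxE -big_split /=.
by apply: eq_bigr => j _; rewrite !ffunE.
Qed.

Lemma prod_bool I (r : seq I) (P : I -> bool) :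
  \prod_(i <- r) (P i)%:R = (all P r)%:R :> algC.
Proof.
elim: r => [|x r IH]; first by rewrite big_nil.
by rewrite big_cons IH /=; case: (P x); rewrite ?mul1r ?mul0r.
Qed.

Lemma tens_diag n (U : 'I_n -> 'M[algC]_2) (f : 'I_n -> 'I_2 -> algC) :
  (forall j, U j = \matrix_(i1, i2) ((i1 == i2)%:R * f j i1)) ->
  tens U = \matrix_(a, b) ((a == b)%:R * \prod_j f j (bitord a j)).
Proof.
move=> hU; apply/matrixP => a b; rewrite !mxE.
transitivity (\prod_j ((bitord a j == bitord b j)%:R * f j (bitord a j))).
  apply: eq_bigr => j _. have := hU j. move=> ->. by rewrite mxE.
rewrite big_split /= prod_bool.
congr (_ * _); congr (_%:R).
congr (nat_of_bool _).
apply/idP/eqP => [/allP h|->].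
  by apply: bitord_inj => j; apply/eqP; apply: h; rewrite mem_index_enum.
by apply/allP => j _; rewrite eqxx.
Qed.

Lemma tens_scale n (c : 'I_n -> algC) (U : 'I_n -> 'M[algC]_2) :
  tens (fun j => c j *: U j) = (\prod_j c j) *: tens U.
Proof.
apply/matrixP => a b; rewrite !mxE -big_split /=.
by apply: eq_bigr => j _; rewrite mxE.
Qed.

Lemma adjmx_mul m p q (A : 'M[algC]_(m, p)) (B : 'M[algC]_(p, q)) :
  adjmx (A *m B) = adjmx B *m adjmx A.
Proof. by rewrite /adjmx map_mxM trmx_mul. Qed.

Lemma adjmxK m p (A : 'M[algC]_(m, p)) : adjmx (adjmx A) = A.
Proof.
by apply/matrixP => i j; rewrite !mxE conjCK.
Qed.

Lemma adjmxZ m p (c : algC) (A : 'M[algC]_(m, p)) : adjmx (c *: A) = c^* *: adjmx A.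
Proof. by apply/matrixP => i j; rewrite !mxE rmorphM. Qed.

Lemma adjmx1 m : adjmx (1%:M : 'M[algC]_m) = 1%:M.
Proof. by apply/matrixP => i j; rewrite !mxE rmorph_nat eq_sym. Qed.

Lemma adjmxN m p (A : 'M[algC]_(m, p)) : adjmx (- A) = - adjmx A.
Proof. by apply/matrixP => i j; rewrite !mxE rmorphN. Qed.

Lemma tens_adj n (U : 'I_n -> 'M[algC]_2) :
  adjmx (tens U) = tens (fun j => adjmx (U j)).
Proof.
apply/matrixP => a b; rewrite !mxE rmorph_prod.
by apply: eq_bigr => j _; rewrite !mxE.
Qed.

Lemma tens1 n : tens (fun _ : 'I_n => 1%:M : 'M[algC]_2) = 1%:M.
Proof.
rewrite (@tens_diag n _ (fun _ _ => 1)); last by move=> j; apply/matrixP => i1 i2; rewrite !mxE mulr1.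
by apply/matrixP => a b; rewrite !mxE big1 ?mulr1.
Qed.

Lemma eq_tens n (U V : 'I_n -> 'M[algC]_2) : (forall j, U j = V j) -> tens U = tens V.
Proof. by move=> h; apply/matrixP => a b; rewrite !mxE; apply: eq_bigr => j _; rewrite h. Qed.

Lemma tens_unitary n (U : 'I_n -> 'M[algC]_2) :
  (forall j, unitary (U j)) -> unitary (tens U).
Proof.
move=> hU; rewrite /unitary tens_adj tens_mul.
rewrite -(tens1 n); exact: eq_tens.
Qed.


Definition sgnF (e : 'F_2) : algC := if e == 0 then 1 else -1.

Lemma sgnFD x y : sgnF (x + y) = sgnF x * sgnF y.
Proof.
by case: (F2_cases x) => ->; case: (F2_cases y) => ->; rewrite /sgnF /= ?mulr1 ?mul1r ?mulrNN ?mulr1.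
Qed.

Lemma sgnF0 : sgnF 0 = 1. Proof. by []. Qed.
Lemma sgnF1 : sgnF 1 = -1. Proof. by []. Qed.

Lemma sgnF_sum I (r : seq I) (P : pred I) (F : I -> 'F_2) :
  \prod_(i <- r | P i) sgnF (F i) = sgnF (\sum_(i <- r | P i) F i).
Proof. by rewrite (big_morph sgnF sgnFD sgnF0). Qed.

Lemma sgnF_conj e : (sgnF e)^* = sgnF e.
Proof. by rewrite /sgnF; case: (e == 0); rewrite ?rmorphN rmorph1. Qed.

Lemma sgnF_sqr e : sgnF e * sgnF e = 1.
Proof. by rewrite /sgnF; case: (e == 0); rewrite ?mulrNN mulr1. Qed.

Lemma sgnF_eq1 e : sgnF e = 1 -> e = 0.
Proof.
case: (F2_cases e) => -> //; rewrite sgnF1 => /eqP.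
by rewrite eq_sym -subr_eq0 opprK -mulr2n mulrn_eq0 oner_eq0.
Qed.

Definition Zq (e : 'F_2) : 'M[algC]_2 := if e == 1 then Zm else 1%:M.
Definition Xq (e : 'F_2) : 'M[algC]_2 := if e == 1 then Xm else 1%:M.
Definition Hm : 'M[algC]_2 := \matrix_(i, j) ((sqrtC 2)^-1 * (-1) ^+ (i * j)).

Lemma Zq_diag e : Zq e = \matrix_(i1, i2) ((i1 == i2)%:R * sgnF (e * (val i1)%:R)).
Proof.
apply/matrixP => i1 i2; rewrite /Zq.
case: (F2_cases e) => ->; rewrite /= !mxE;
case: i1 => [[|[|?]] ?] //; case: i2 => [[|[|?]] ?] //=;
by rewrite ?mulr1 ?mul1r ?mulr0 ?mul0r.
Qed.

Lemma sum_delta (R : pzSemiRingType) (I : finType) (F : I -> R) i :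
  \sum_t F t * (t == i)%:R = F i.
Proof.
rewrite (bigD1 i) //= eqxx mulr1 big1 ?addr0 // => t /negPf ->; exact: mulr0.
Qed.

Definition dotF n (c r : 'rV['F_2]_n) : 'F_2 := \sum_j c 0 j * r 0 j.

Lemma Zpow_diag n (c : 'rV['F_2]_n) :
  Zpow c = diag_mx (\row_a sgnF (dotF c (bits_rv a))).
Proof.
rewrite /Zpow (@tens_diag n _ (fun j i => sgnF (c 0 j * (val i)%:R))); last first.
  by move=> j; exact: Zq_diag.
apply/matrixP => a b; rewrite !mxE sgnF_sum mulr_natl /dotF.
by congr (sgnF _ *+ _); apply: eq_bigr => j _; rewrite bits_rvE.
Qed.

Lemma dotFDl n (a b r : 'rV['F_2]_n) : dotF (a + b) r = dotF a r + dotF b r.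
Proof. by rewrite /dotF -big_split; apply: eq_bigr => j _; rewrite mxE mulrDl. Qed.

Lemma dotF0 n (r : 'rV['F_2]_n) : dotF 0 r = 0.
Proof. by rewrite /dotF big1 // => j _; rewrite mxE mul0r. Qed.

Lemma dotF_delta n (c : 'rV['F_2]_n) j : dotF c (delta_mx 0 j) = c 0 j.
Proof.
rewrite /dotF -[RHS](sum_delta (fun t => c 0 t) j); apply: eq_bigr => t _.
by rewrite mxE eqxx.
Qed.

Lemma Zpow_add n (a b : 'rV['F_2]_n) : Zpow a *m Zpow b = Zpow (a + b).
Proof.
rewrite !Zpow_diag mulmx_diag; congr diag_mx; apply/matrixP => i j.
by rewrite !mxE dotFDl sgnFD.
Qed.

Lemma Zpow0 n : Zpow (0 : 'rV['F_2]_n) = 1%:M.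
Proof.
rewrite Zpow_diag -diag_const_mx; congr diag_mx; apply/matrixP => i j.
by rewrite !mxE dotF0.
Qed.

Lemma Zpow_entry n (c : 'rV['F_2]_n) r : Zpow c (idx r) (idx r) = sgnF (dotF c r).
Proof. by rewrite Zpow_diag mxE eqxx mulr1n mxE idxK. Qed.

Lemma sgnF_inj : injective sgnF.
Proof.
move=> x y; case: (F2_cases x) => ->; case: (F2_cases y) => -> // h.
  by have := sgnF_eq1 (esym h).
by have := sgnF_eq1 h.
Qed.

Lemma Zpow_inj n : injective (@Zpow n).
Proof.
move=> a b e; apply/matrixP => i j; rewrite [i]ord1.
have := congr1 (fun M : 'M[algC]_(2^n) => M (idx (delta_mx 0 j)) (idx (delta_mx 0 j))) e.
by rewrite /= !Zpow_entry !dotF_delta => /sgnF_inj.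
Qed.

Lemma bits_rv0 n : bits_rv (Ordinal (ltac:(by rewrite expn_gt0) : (0 < 2^n)%N)) = 0.
Proof. by apply/matrixP => i j; rewrite !mxE /bit /= div0n. Qed.

Lemma Zpow_neqN1 n (c : 'rV['F_2]_n) : Zpow c <> - 1%:M.
Proof.
move=> e.
have := congr1 (fun M : 'M[algC]_(2^n) => M (idx 0) (idx 0)) e.
rewrite /= Zpow_entry /dotF big1 ?sgnF0; last by move=> j _; rewrite mxE mulr0.
rewrite !mxE eqxx /= => /eqP.
by rewrite -subr_eq0 opprK -mulr2n mulrn_eq0 oner_eq0.
Qed.


Lemma big_ord2 (F : 'I_2 -> algC) : \sum_i F i = F ord0 + F (Ordinal (isT : (1 < 2)%N)).
Proof.
rewrite big_ord_recl big_ord_recl big_ord0 addr0; congr (_ + F _); exact: val_inj.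
Qed.

Lemma hs_conj : ((sqrtC 2)^-1)^* = (sqrtC 2)^-1 :> algC.
Proof. by apply: geC0_conj; rewrite invr_ge0 sqrtC_ge0 ler0n. Qed.

Lemma hs_sqr : (sqrtC 2)^-1 * (sqrtC 2)^-1 = 2^-1 :> algC.
Proof. by rewrite -invfM -expr2 sqrtCK. Qed.

Lemma adj_Hm : adjmx Hm = Hm.
Proof.
apply/matrixP => i j; rewrite !mxE /= rmorphM /= hs_conj rmorphXn rmorphN rmorph1 mulnC //.
Qed.

Lemma Hm_unitary : unitary Hm.
Proof.
rewrite /unitary adj_Hm; apply/matrixP => i j; rewrite !mxE !big_ord2 !mxE.
have h2 : (2^-1 + 2^-1 : algC) = 1.
  by field.
case: i => [[|[|?]] ?] //; case: j => [[|[|?]] ?] //=;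
rewrite ?expr0 ?expr1 ?mulr1 ?mulrN1 ?mulrNN ?mulrN ?mulNr ?opprK hs_sqr ?subrr //.
Qed.

Lemma HZH e : Hm *m Zq e *m adjmx Hm = Xq e.
Proof.
rewrite adj_Hm /Zq /Xq; case: (F2_cases e) => ->; rewrite /=.
  by rewrite mulmx1; have := Hm_unitary; rewrite /unitary adj_Hm.
apply/matrixP => i j; rewrite !mxE !big_ord2 !mxE !big_ord2 !mxE.
have h2 : (2^-1 + 2^-1 : algC) = 1.
  by field.
case: i => [[|[|?]] ?] //; case: j => [[|[|?]] ?] //=;
rewrite ?expr0 ?expr1 ?mulr1 ?mulr0 ?mul0r ?addr0 ?add0r ?mulrN1 ?mulrNN ?mulrN ?mulNr ?opprK ?hs_sqr ?subrr //; rewrite ?mulr0 ?addr0 ?subr0 hs_sqr ?subrr ?h2 ?mulr0n ?mulr1n //.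
Qed.

Definition Hn n : 'M[algC]_(2^n) := tens (fun _ : 'I_n => Hm).
Definition Xpow n (a : 'rV['F_2]_n) : 'M[algC]_(2^n) := tens (fun j => Xq (a 0 j)).

Lemma adj_Hn n : adjmx (Hn n) = Hn n.
Proof. by rewrite /Hn tens_adj; apply: eq_tens => j; rewrite adj_Hm. Qed.

Lemma Hn_unitary n : unitary (Hn n).
Proof. apply: tens_unitary => j; exact: Hm_unitary. Qed.

Lemma HnZHn n (a : 'rV['F_2]_n) : Hn n *m Zpow a *m adjmx (Hn n) = Xpow a.
Proof.
by rewrite /Hn /Zpow tens_adj !tens_mul; apply: eq_tens => j; exact: HZH.
Qed.

Lemma Xq_entry e (i1 i2 : 'I_2) : Xq e i1 i2 = ((val i2)%:R == (val i1)%:R + e :> 'F_2)%:R.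
Proof.
rewrite /Xq; case: (F2_cases e) => ->; rewrite /= !mxE;
case: i1 => [[|[|?]] ?] //; case: i2 => [[|[|?]] ?] //=.
Qed.

Lemma Xpow_entry n (a : 'rV['F_2]_n) s t :
  Xpow a s t = (bits_rv t == bits_rv s + a)%:R.
Proof.
rewrite /Xpow mxE.
under eq_bigr do rewrite Xq_entry.
rewrite prod_bool; congr (nat_of_bool _ )%:R.
apply/allP/eqP => [h|e].
  apply/matrixP => i j; rewrite [i]ord1 !mxE.
  have := h j (mem_index_enum _); rewrite !bitordE => /eqP ->.
  by [].
move=> j _; apply/eqP; have := congr1 (fun r : 'rV['F_2]_n => r 0 j) e.
by rewrite !mxE !bitordE.
Qed.

Lemma tens_one (U : 'I_1 -> 'M[algC]_2) : tens U = U ord0 :> 'M[algC]_(2^1).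
Proof.
have hb : forall a : 'I_(2^1), bitord a ord0 = a.
  move=> a; apply: val_inj; rewrite bitordE /bit expn0 divn1.
  by case: a => [[|[|?]] ?].
by apply/matrixP => a b; rewrite mxE big_ord1 !hb.
Qed.

Lemma pauli1_of_1 (M : 'M[algC]_2) : pauli 1 M ->
  exists c P, pauli1 P /\ M = 'i ^+ c *: P.
Proof.
by case=> c [Ps [hP ->]]; exists c, (Ps ord0); split => //; rewrite tens_one.
Qed.

Lemma pauli_1_of (P : 'M[algC]_2) : pauli1 P -> pauli 1 P.
Proof.
move=> hP; exists 0%N, (fun _ => P); split => //.
by rewrite expr0 scale1r tens_one.
Qed.

Lemma pauli_tens n (U : 'I_n -> 'M[algC]_2) :
  (forall j, exists m P, pauli1 P /\ U j = 'i ^+ m *: P) ->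
  forall c, pauli n ('i ^+ c *: tens U).
Proof.
move=> h c; have [m hm] := fin_all_exists h.
have [P hP] := fin_all_exists hm.
exists (c + \sum_j m j)%N, P; split; first by move=> j; case: (hP j).
rewrite (eq_tens (V := fun j => 'i ^+ m j *: P j)); last by move=> j; case: (hP j).
by rewrite tens_scale prodrXr scalerA exprD.
Qed.

Lemma ZX_pauli c a : exists m P, pauli1 P /\ Zq c *m Xq a = 'i ^+ m *: P.
Proof.
rewrite /Zq /Xq; case: (F2_cases c) => ->; case: (F2_cases a) => -> /=.
- by exists 0%N, 1%:M; rewrite mulmx1 expr0 scale1r; split => //; left.
- by exists 0%N, Xm; rewrite mul1mx expr0 scale1r; split => //; right; left.
- by exists 0%N, Zm; rewrite mulmx1 expr0 scale1r; split => //; right; right; right.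
exists 1%N, Ym; split; first by right; right; left.
rewrite expr1 /Ym scalerA -expr2 sqrCi.
apply/matrixP => i j; rewrite !mxE !big_ord2 !mxE.
by case: i => [[|[|?]] ?] //; case: j => [[|[|?]] ?] //=;
  rewrite ?mulr0n ?mulr1n ?mulr0 ?mul0r ?mulr1 ?mul1r ?addr0 ?add0r ?expr0 ?expr1 ?mulrN1 ?mulN1r ?opprK ?oppr0.
Qed.


Definition Dg n (G : 'M['F_2]_n) : 'M[algC]_(2 ^ n) :=
  \prod_(u < n) \prod_(v < n | (u < v)%N && (G u v == 1)) CZ u v.

Definition qf n (G : 'M['F_2]_n) (x : 'rV['F_2]_n) : 'F_2 :=
  \sum_(u < n) \sum_(v < n | (u < v)%N) G u v * x 0 u * x 0 v.

Lemma prod_diag N I (r : seq I) (P : pred I) (d : I -> 'rV[algC]_N) :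
  \prod_(i <- r | P i) diag_mx (d i) = diag_mx (\row_a \prod_(i <- r | P i) d i 0 a).
Proof.
elim: r => [|x r IH].
  rewrite big_nil; change ((1%:M : 'M[algC]_N) = diag_mx (\row_a \prod_(i <- [::] | P i) d i 0 a)); rewrite -diag_const_mx.
  apply/matrixP => i j.
  by rewrite !mxE big_nil.
rewrite big_cons; case hx: (P x).
  rewrite IH -mulmxE mulmx_diag; congr diag_mx; apply/matrixP => i j.
  by rewrite !mxE big_cons hx.
rewrite IH; congr diag_mx; apply/matrixP => i j.
by rewrite !mxE big_cons hx.
Qed.

Lemma CZ_diag n (u v : 'I_n) :
  CZ u v = diag_mx (\row_a (if bit a u && bit a v then -1 else 1)).
Proof. by apply/matrixP => a b; rewrite !mxE mulr_natl. Qed.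

Lemma Dg_diag n (G : 'M['F_2]_n) :
  Dg G = diag_mx (\row_s sgnF (qf G (bits_rv s))).
Proof.
rewrite /Dg.
under eq_bigr do under eq_bigr do rewrite CZ_diag.
under eq_bigr do rewrite prod_diag.
rewrite prod_diag; congr diag_mx; apply/matrixP => i s.
rewrite !mxE /qf -sgnF_sum; apply: eq_bigr => u _.
rewrite mxE -sgnF_sum big_mkcondr /=; apply: eq_bigr => v _.
rewrite mxE !bits_rvE !bitordE.
case: (F2_cases (G u v)) => -> /=; first by rewrite !mul0r.
by case: (bit s u); case: (bit s v).
Qed.

Lemma cross_sum n (G : 'M['F_2]_n) (hG : simple_graph G) (x a : 'rV['F_2]_n) :
  \sum_(u < n) \sum_(v < n | (u < v)%N) (G u v * x 0 u * a 0 v + G u v * a 0 u * x 0 v)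
  = dotF (x *m G) a.
Proof.
case: hG => hT hd.
have sym u v : G v u = G u v by rewrite -{1}hT mxE.
under eq_bigr do rewrite big_split /=.
rewrite big_split /=.
under eq_bigr do rewrite big_mkcond /=.
under [X in _ + X]eq_bigr do rewrite big_mkcond /=.
rewrite [X in _ + X]exchange_big /= -big_split /=.
rewrite /dotF.
under [RHS]eq_bigr do rewrite mxE big_distrl /=.
rewrite [RHS]exchange_big /=.
apply: eq_bigr => u _; rewrite -big_split /=; apply: eq_bigr => v _.
case: (ltngtP u v) => h.
- by rewrite addr0; ring.
- by rewrite add0r sym; ring.
have -> : v = u by apply: val_inj.
by rewrite hd; ring.
Qed.

Lemma qf_add n (G : 'M['F_2]_n) (hG : simple_graph G) (x a : 'rV['F_2]_n) :
  qf G (x + a) = qf G x + qf G a + dotF (x *m G) a.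
Proof.
rewrite -cross_sum // /qf -!big_split /=; apply: eq_bigr => u _.
rewrite -!big_split /=; apply: eq_bigr => v _.
rewrite !mxE; ring.
Qed.

Lemma dotF_mx n (c r : 'rV['F_2]_n) : dotF c r = (c *m r^T) 0 0.
Proof. by rewrite /dotF mxE; apply: eq_bigr => j _; rewrite mxE. Qed.

Lemma dotF_sym n (G : 'M['F_2]_n) (hG : simple_graph G) (x a : 'rV['F_2]_n) :
  dotF (x *m G) a = dotF (a *m G) x.
Proof.
case: hG => hT _.
have sym u v : G v u = G u v by rewrite -{1}hT mxE.
rewrite /dotF.
under eq_bigr do rewrite mxE big_distrl /=.
under [RHS]eq_bigr do rewrite mxE big_distrl /=.
rewrite [RHS]exchange_big /=; apply: eq_bigr => j _; apply: eq_bigr => u _.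
by rewrite sym; ring.
Qed.

Lemma adj_diag N (d : 'rV[algC]_N) : adjmx (diag_mx d) = diag_mx (map_mx Num.conj d).
Proof.
apply/matrixP => i j; rewrite !mxE rmorphMn eq_sym.
by case: eqP => [->|_] //; rewrite !mulr0n.
Qed.

Lemma adj_Dg n (G : 'M['F_2]_n) : adjmx (Dg G) = Dg G.
Proof.
rewrite Dg_diag adj_diag; congr diag_mx; apply/matrixP => i j.
by rewrite !mxE sgnF_conj.
Qed.

Lemma DXD n (G : 'M['F_2]_n) (hG : simple_graph G) (a : 'rV['F_2]_n) :
  Dg G *m Xpow a *m adjmx (Dg G) = sgnF (qf G a) *: (Zpow (a *m G) *m Xpow a).
Proof.
have hX : Xpow a = \matrix_(s, t) (bits_rv t == bits_rv s + a)%:R.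
  by apply/matrixP => s t; rewrite Xpow_entry mxE.
rewrite hX adj_Dg Zpow_diag Dg_diag mul_diag_mx mul_mx_diag mul_diag_mx.
apply/matrixP => s t; rewrite !mxE.
case: eqP => [e|_]; last by rewrite mulr0n !(mulr0, mul0r).
rewrite e qf_add // !sgnFD dotF_sym // mulr1n !mulr1 !mulrA sgnF_sqr mul1r.
by rewrite mulrC.
Qed.


Lemma sgnF_i e : sgnF e = 'i ^+ (if e == 0 then 0%N else 2%N).
Proof. by rewrite /sgnF; case: (e == 0); rewrite ?expr0 ?sqrCi. Qed.

Lemma conj_pauli_1 (L P : 'M[algC]_2) : clifford 1 L -> pauli1 P ->
  exists m Q, pauli1 Q /\ L *m P *m adjmx L = 'i ^+ m *: Q.
Proof.
move=> [_ hc] hP; have [h1 _] := hc P (pauli_1_of hP).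
exact: pauli1_of_1 h1.
Qed.

Definition Wm n (G : 'M['F_2]_n) (L : 'I_n -> 'M[algC]_2) : 'M[algC]_(2^n) :=
  tens L *m Dg G *m Hn n.

Lemma gen_pauli n (G : 'M['F_2]_n) (hG : simple_graph G) (L : 'I_n -> 'M[algC]_2)
  (hL : forall j, clifford 1 (L j)) (a : 'rV['F_2]_n) :
  pauli n (Wm G L *m Zpow a *m adjmx (Wm G L)).
Proof.
rewrite /Wm !adjmx_mul.
have -> : tens L *m Dg G *m Hn n *m Zpow a *m (adjmx (Hn n) *m (adjmx (Dg G) *m adjmx (tens L)))
   = tens L *m (Dg G *m (Hn n *m Zpow a *m adjmx (Hn n)) *m adjmx (Dg G)) *m adjmx (tens L).
  by rewrite !mulmxA.
rewrite HnZHn DXD // /Zpow /Xpow tens_mul sgnF_i.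
rewrite -scalemxAr -scalemxAl tens_adj !tens_mul.
apply: pauli_tens => j.
have [m [P [hP ->]]] := ZX_pauli ((a *m G) 0 j) (a 0 j).
rewrite -scalemxAr -scalemxAl.
have [m' [Q [hQ ->]]] := conj_pauli_1 (hL j) hP.
by exists (m + m')%N, Q; split => //; rewrite scalerA exprD.
Qed.


Definition Bm n k (Gam : 'M['F_2]_(k, n)) : 'M[algC]_(2^n, 2^k) :=
  \matrix_(s, x) (s == idx (bits_rv x *m Gam))%:R.

Lemma sign_sgnF (i1 i2 : 'I_2) :
  (-1) ^+ (i1 * i2) = sgnF ((val i2)%:R * (val i1)%:R) :> algC.
Proof. by case: i1 => [[|[|?]] ?] //; case: i2 => [[|[|?]] ?] //=; rewrite ?expr0 ?expr1. Qed.

Lemma enc_decomp n k (G : 'M['F_2]_n) (Gam : 'M['F_2]_(k, n)) :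
  enc G Gam = Dg G *m Hn n *m Bm Gam.
Proof.
apply/matrixP => s x.
rewrite /enc mxE /graph_state -/(Dg G).
rewrite Zpow_diag Dg_diag !mul_diag_mx !mxE /Bm.
under eq_bigr do rewrite !mxE.
rewrite sum_delta.
under eq_bigr do rewrite mxE.
rewrite big_split /= prodr_const card_ord exprVn.
have -> : sgnF (dotF (bits_rv x *m Gam) (bits_rv s)) =
  \prod_(j < n) (-1) ^+ (bitord s j * bitord (idx (bits_rv x *m Gam)) j).
  rewrite -sgnF_sum /dotF; apply: eq_bigr => j _.
  by rewrite sign_sgnF bits_rvE -[(val (bitord (idx _) j))%:R]bits_rvE idxK.
ring.
Qed.


Lemma unitary_mul m (A B : 'M[algC]_m) : unitary A -> unitary B -> unitary (A *m B).
Proof.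
rewrite /unitary adjmx_mul => hA hB.
by rewrite mulmxA -(mulmxA (adjmx B)) hA mulmx1 hB.
Qed.

Lemma unitaryC m (A : 'M[algC]_m) : unitary A -> A *m adjmx A = 1%:M.
Proof. exact: mulmx1C. Qed.

Lemma Dg_unitary n (G : 'M['F_2]_n) : unitary (Dg G).
Proof.
rewrite /unitary adj_Dg Dg_diag mulmx_diag -diag_const_mx; congr diag_mx.
by apply/matrixP => i j; rewrite !mxE sgnF_sqr.
Qed.

Lemma Wm_unitary n (G : 'M['F_2]_n) (L : 'I_n -> 'M[algC]_2) :
  (forall j, unitary (L j)) -> unitary (Wm G L).
Proof.
move=> hL; apply: unitary_mul; last exact: Hn_unitary.
apply: unitary_mul; last exact: Dg_unitary.
exact: tens_unitary.
Qed.

Lemma idx_inj n : injective (@idx n).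
Proof. by move=> a b e; rewrite -(idxK a) -(idxK b) e. Qed.

Lemma Bm_iso n k (Gam : 'M['F_2]_(k, n)) :
  (forall x y, bits_rv x *m Gam = bits_rv y *m Gam -> x = y) ->
  adjmx (Bm Gam) *m Bm Gam = 1%:M.
Proof.
move=> hinj; apply/matrixP => x y; rewrite !mxE /Bm /adjmx.
transitivity (\sum_j (j == idx (bits_rv x *m Gam))%:R * (j == idx (bits_rv y *m Gam))%:R :> algC).
  by apply: eq_bigr => j _; rewrite !mxE conjC_nat.
rewrite (sum_delta (fun j : 'I_(2^n) => (j == idx (bits_rv x *m Gam))%:R : algC)); congr (nat_of_bool _)%:R.
apply/eqP/eqP => [/idx_inj/hinj -> //|->] //.
Qed.

Lemma ZB n k (Gam : 'M['F_2]_(k, n)) (c : 'rV['F_2]_n) :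
  c *m Gam^T = 0 -> Zpow c *m Bm Gam = Bm Gam.
Proof.
move=> hc; rewrite Zpow_diag mul_diag_mx; apply/matrixP => s x.
rewrite /Bm !mxE; case: eqP => [->|_]; last by rewrite mulr0.
rewrite idxK.
suff -> : dotF c (bits_rv x *m Gam) = 0 by rewrite sgnF0 mul1r.
transitivity ((c *m Gam^T *m (bits_rv x)^T) 0 0); last by rewrite hc mul0mx mxE.
rewrite /dotF mxE.
under [RHS]eq_bigr do rewrite mxE big_distrl /=.
rewrite [RHS]exchange_big /=; apply: eq_bigr => i _.
rewrite mxE big_distrr /=; apply: eq_bigr => j _.
by rewrite !mxE; ring.
Qed.


Definition gen n (W : 'M[algC]_(2^n)) (c : 'rV['F_2]_n) := W *m Zpow c *m adjmx W.

Lemma gen_mul n (W : 'M[algC]_(2^n)) a b : unitary W -> gen W a *m gen W b = gen W (a + b).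
Proof.
move=> hW; rewrite /gen !mulmxA -(mulmxA _ (adjmx W) W) hW mulmx1.
by rewrite -(mulmxA W (Zpow a)) Zpow_add.
Qed.

Lemma gen_cancel n (W : 'M[algC]_(2^n)) a : unitary W -> adjmx W *m gen W a *m W = Zpow a.
Proof.
move=> hW; rewrite /gen !mulmxA hW mul1mx -mulmxA hW mulmx1 //.
Qed.

Lemma gen_inj n (W : 'M[algC]_(2^n)) a b : unitary W -> gen W a = gen W b -> a = b.
Proof.
move=> hW e; apply: Zpow_inj; by rewrite -(gen_cancel a hW) -(gen_cancel b hW) e.
Qed.

Lemma gen_neqN1 n (W : 'M[algC]_(2^n)) a : unitary W -> gen W a <> - 1%:M.
Proof.
move=> hW e; apply: (@Zpow_neqN1 n a).
by rewrite -(gen_cancel a hW) e mulmxN mulmx1 mulNmx hW.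
Qed.

Lemma prod_gen n (W : 'M[algC]_(2^n)) (cs : seq 'rV['F_2]_n) (s : seq nat) :
  unitary W -> all (fun i => (i < size cs)%N) s ->
  \prod_(i <- s) (map (gen W) cs)`_i = gen W (\sum_(i <- s) cs`_i).
Proof.
move=> hW; elim: s => [|t s IH] /=.
  by rewrite !big_nil /gen Zpow0 mulmx1 unitaryC.
move/andP => [ht hs]; rewrite !big_cons IH // (nth_map 0) //.
by rewrite -mulmxE gen_mul.
Qed.


Definition codes m n (K : 'M['F_2]_(m, n)) : seq 'rV['F_2]_n := [seq row j K | j <- enum 'I_m].

Lemma codes_size m n (K : 'M['F_2]_(m, n)) : size (codes K) = m.
Proof. by rewrite size_map size_enum_ord. Qed.

Lemma codes_nth m n (K : 'M['F_2]_(m, n)) j (hj : (j < m)%N) : (codes K)`_j = row (Ordinal hj) K.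
Proof.
rewrite /codes (nth_map (Ordinal hj)) ?size_enum_ord //; congr row.
by apply: val_inj; rewrite /= nth_enum_ord.
Qed.

Lemma rem_nth_size T i (s : seq T) : (i < size s)%N -> size (rem_nth i s) = (size s).-1.
Proof.
move=> hi; rewrite /rem_nth size_cat size_take size_drop hi.
by case: (size s) hi => // m hi; rewrite subSS subnKC.
Qed.

Lemma rem_nth_nth T (x0 : T) i s t : (i < size s)%N -> (t < (size s).-1)%N ->
  nth x0 (rem_nth i s) t = nth x0 s (if (t < i)%N then t else t.+1).
Proof.
move=> hi ht; rewrite /rem_nth nth_cat size_take hi.
case: ifP => h; first by rewrite nth_take.
rewrite nth_drop; congr nth.
by rewrite addSn subnKC // leqNgt h.
Qed.

Definition ev m (j : nat) : 'rV['F_2]_m := \row_l ((val l == j)%:R).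

Lemma ev_mul m n (K : 'M['F_2]_(m, n)) j : (j < m)%N -> ev m j *m K = (codes K)`_j.
Proof.
move=> hj; rewrite codes_nth; apply/matrixP => a c; rewrite !mxE.
rewrite -(sum_delta (fun l => K l c) (Ordinal hj)); apply: eq_bigr => l _.
by rewrite mxE mulrC.
Qed.

Lemma codes_indep m n (K : 'M['F_2]_(m, n)) (hK : row_free K) i (s : seq nat) :
  (i < m)%N -> all (fun t => (t < size (rem_nth i (codes K)))%N) s ->
  (codes K)`_i <> \sum_(t <- s) (rem_nth i (codes K))`_t.
Proof.
move=> hi; rewrite rem_nth_size ?codes_size // => /allP hs e.
pose r t := if (t < i)%N then t else t.+1.
have hr t : t \in s -> (r t < m)%N /\ r t != i.
  move=> /hs ht; rewrite /r; case: ifP => h; split.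
  - by apply: (leq_trans h); exact: ltnW hi.
  - by rewrite (ltn_eqF h).
  - by move: ht; case: (m) hi => // m' _ /=.
  - by rewrite eq_sym ltn_eqF // ltnS leqNgt h.
pose w := ev m i - \sum_(t <- s) ev m (r t).
have hw : w *m K = 0.
  rewrite mulmxBl mulmx_suml ev_mul // e big_seq_cond [X in _ - X]big_seq_cond.
  apply/eqP; rewrite subr_eq0; apply/eqP; apply: eq_bigr => t /andP [ht _].
  rewrite rem_nth_nth ?codes_size //; last by have := hs t ht.
  by rewrite ev_mul //; case: (hr t ht).
have : w = 0 by apply: (row_free_inj hK); rewrite hw mul0mx.
move/matrixP => /(_ 0 (Ordinal hi)); rewrite !mxE summxE big_seq_cond big1 ?subr0 /= ?eqxx //.
move=> t /andP [ht _]; rewrite mxE /=.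
by case: (hr t ht) => _ /negPf; rewrite eq_sym => ->.
Qed.


Lemma rank_row_base m n (A : 'M['F_2]_(m, n)) : \rank (row_base A) = \rank A.
Proof. by have /eqP := row_base_free A. Qed.

Lemma Kb_rank n k (Gam : 'M['F_2]_(k, n)) : \rank Gam = k ->
  \rank (kermx Gam^T) = (n - k)%N.
Proof. by move=> h; rewrite mxrank_ker mxrank_tr h. Qed.

Lemma Kb_ker n k (Gam : 'M['F_2]_(k, n)) : row_base (kermx Gam^T) *m Gam^T = 0.
Proof. by apply/sub_kermxP; rewrite eq_row_base. Qed.

Lemma Kb_row_ker n k (Gam : 'M['F_2]_(k, n)) j : row j (row_base (kermx Gam^T)) *m Gam^T = 0.
Proof. by rewrite -row_mul Kb_ker row0. Qed.

Lemma Kb_span n k (Gam : 'M['F_2]_(k, n)) : \rank Gam = k -> (k <= n)%N ->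
  forall r : 'rV['F_2]_n,
  (forall j, dotF (row j (row_base (kermx Gam^T))) r = 0) -> exists x : 'rV_k, r = x *m Gam.
Proof.
move=> hr hkn r hj.
set Kb := row_base (kermx Gam^T).
have h1 : (r <= kermx Kb^T)%MS.
  apply/sub_kermxP; apply/matrixP => a j; rewrite [RHS]mxE.
  transitivity (dotF (row j Kb) r); last exact: hj j.
  rewrite /dotF mxE; apply: eq_bigr => l _; rewrite !mxE mulrC.
  by rewrite [a]ord1.
have h2 : (Gam <= kermx Kb^T)%MS.
  apply/sub_kermxP; apply/matrixP => a j.
  rewrite [RHS]mxE; transitivity ((Kb *m Gam^T) j a); last by rewrite Kb_ker mxE.
  by rewrite !mxE; apply: eq_bigr => l _; rewrite !mxE mulrC.
have h3 : \rank (kermx Kb^T) = k.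
  by rewrite mxrank_ker mxrank_tr rank_row_base Kb_rank // subKn.
have h4 : (kermx Kb^T <= Gam)%MS.
  by have := (mxrank_leqif_sup h2).2; rewrite h3 hr eqxx => <-.
have /submxP [D ->] := submx_trans h1 h4.
by exists D.
Qed.

Unset Implicit Arguments.
Set Strict Implicit.


Theorem proposition2 (n k : nat) (hk : (1 <= k)%N) (hkn : (k < n)%N)
  (G : 'M['F_2]_n) (hG : simple_graph G) (Gam : 'M['F_2]_(k, n))
  (C : 'M[algC]_(2 ^ k)) (hC : clifford k C)
  (L : 'I_n -> 'M[algC]_2) (hL : forall j, clifford 1 (L j)) :
  valid_stabilizer_encoder n k (tens L *m enc G Gam *m C) <-> \rank Gam = k.
Proof.
have hLu : forall j, unitary (L j) by move=> j; case: (hL j).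
have hCu : unitary C by case: hC.
set W := Wm G L.
have hW : unitary W by exact: Wm_unitary.
have hE : tens L *m enc G Gam *m C = W *m Bm Gam *m C.
  by rewrite enc_decomp /W /Wm !mulmxA.
have hWd : W = Wm G L by [].
clearbody W.
rewrite hE; split.
- case=> [[c [_ hc]] _].
  apply/eqP; rewrite eqn_leq rank_leq_row /= leqNgt; apply/negP => hlt.
  have : kermx Gam != 0.
    by rewrite -mxrank_eq0 mxrank_ker subn_eq0 -ltnNge.
  case/rowV0Pn => w /sub_kermxP hw wnz.
  pose x0 := idx (0 : 'rV['F_2]_k); pose x1 := idx w.
  have hx01 : x0 != x1.
    apply/negP => /eqP e; move: wnz; rewrite -(idxK w) -/x1 -e idxK eqxx //.
  have hcol s : enc G Gam s x0 = enc G Gam s x1.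
    by rewrite /enc !mxE /x0 /x1 !idxK hw mul0mx.
  pose u : 'cV[algC]_(2^k) := \col_x ((x == x0)%:R - (x == x1)%:R).
  have hu : enc G Gam *m u = 0.
    apply/matrixP => s z; rewrite !mxE.
    transitivity (\sum_x (enc G Gam s x * (x == x0)%:R - enc G Gam s x * (x == x1)%:R)).
      apply: eq_bigr => x _; have -> : u x z = (x == x0)%:R - (x == x1)%:R by rewrite /u mxE.
      by rewrite mulrBr.
    by rewrite sumrB !sum_delta hcol subrr.
  pose v := adjmx C *m u.
  have hEv : W *m Bm Gam *m C *m v = 0.
    rewrite /v mulmxA -(mulmxA (W *m Bm Gam) C (adjmx C)) unitaryC // mulmx1.
    rewrite (_ : W *m Bm Gam = tens L *m enc G Gam); last first.
      by rewrite enc_decomp hWd /Wm !mulmxA.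
    by rewrite -mulmxA hu mulmx0.
  have hv : v = 0.
    have <- : adjmx (c *: (W *m Bm Gam *m C)) *m ((c *: (W *m Bm Gam *m C)) *m v) = v.
      by rewrite mulmxA hc mul1mx.
    by rewrite -scalemxAl hEv scaler0 mulmx0.
  have : u = 0 by rewrite -[u]mul1mx -(unitaryC hCu) -mulmxA -/v hv mulmx0.
  move/matrixP => /(_ x0 0); rewrite !mxE eqxx (negPf hx01) subr0 /=.
  by move/eqP; rewrite oner_eq0.
- move=> hr.
  have hkn' : (k <= n)%N by exact: ltnW.
  have hinj : forall x y, bits_rv x *m Gam = bits_rv y *m Gam -> x = y.
    move=> x y e; apply: bits_rv_inj; apply: (row_free_inj (A := Gam)) => //.
    by rewrite /row_free hr.
  split.
    exists 1; split; first exact: oner_neq0.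
    rewrite scale1r [adjmx (_ *m C)]adjmx_mul [adjmx (W *m _)]adjmx_mul.
    rewrite -!mulmxA (mulmxA (adjmx W)) hW mul1mx (mulmxA (adjmx (Bm Gam))) Bm_iso //.
    by rewrite mul1mx.
  set Kb := row_base (kermx Gam^T).
  have hsz : size (codes Kb) = (n - k)%N by rewrite codes_size Kb_rank.
  have hmap i s : rem_nth i (map (gen W) s) = map (gen W) (rem_nth i s).
    by rewrite /rem_nth map_cat map_take map_drop.
  exists (map (gen W) (codes Kb)); split.
    split; first by rewrite size_map.
    split.
      move=> i hi; rewrite (nth_map 0) -?(size_map (gen W)) //.
      rewrite hWd; exact: gen_pauli.
    split.
      move=> i j hi hj; rewrite size_map in hi hj.
      by rewrite !(nth_map 0) // !gen_mul // addrC.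
    split.
      case=> s [hs e]; rewrite size_map in hs; rewrite prod_gen // in e.
      by move: (esym e); apply: gen_neqN1.
    move=> i hi [s [hs e]]; rewrite size_map in hi.
    rewrite hmap size_map in hs; rewrite hmap prod_gen // (nth_map 0) // in e.
    have := gen_inj hW e.
    apply: codes_indep => //; first exact: row_base_free.
    by rewrite codes_size in hi.
  have hcodeK : forall s : seq nat, all (fun i => (i < size (codes Kb))%N) s ->
      (\sum_(i <- s) (codes Kb)`_i) *m Gam^T = 0.
    move=> s /allP hs; rewrite mulmx_suml big_seq_cond big1 // => i /andP [hi _].
    have hi' := hs i hi; rewrite codes_size in hi'.
    by rewrite codes_nth Kb_row_ker.
  move=> v; split.
    case=> x -> M [s [hs ->]]; rewrite size_map in hs; rewrite prod_gen // /gen.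
    rewrite !mulmxA -(mulmxA _ (adjmx W) W) hW mulmx1.
    by rewrite -(mulmxA W (Zpow _)) ZB // hcodeK.
  move=> hv.
  pose u := adjmx W *m v.
  have hvu : v = W *m u by rewrite /u mulmxA unitaryC // mul1mx.
  clearbody u.
  have hZ : forall j, Zpow (row j Kb) *m u = u.
    move=> j.
    have hj : (val j < size (map (gen W) (codes Kb)))%N.
      by rewrite size_map codes_size; exact: ltn_ord.
    have hg : gen_group (map (gen W) (codes Kb)) ((map (gen W) (codes Kb))`_j).
      exists [:: val j]; split; first by rewrite /= hj.
      by rewrite big_cons big_nil mulr1.
    have := hv _ hg.
    rewrite (nth_map 0) ?codes_size // codes_nth /gen.
    move=> e.
    have := congr1 (mulmx (adjmx W)) e.
    rewrite hvu !mulmxA hW !mul1mx -(mulmxA _ (adjmx W) W) hW mulmx1.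
    by have -> : Ordinal (ltn_ord j) = j by apply: val_inj.
  have hz : forall s, u s 0 != 0 -> exists x : 'I_(2^k), s = idx (bits_rv x *m Gam).
    move=> s hs.
    have hd : forall j, dotF (row j Kb) (bits_rv s) = 0.
      move=> j; apply: sgnF_eq1; apply: (mulIf hs); rewrite mul1r.
      have := congr1 (fun M : 'cV_(2^n) => M s 0) (hZ j).
      by rewrite /= Zpow_diag mul_diag_mx !mxE.
    have [D hD] := Kb_span hr hkn' hd.
    by exists (idx D); rewrite idxK -hD bits_rvK.
  pose y : 'cV[algC]_(2^k) := \col_x u (idx (bits_rv x *m Gam)) 0.
  have hBy : Bm Gam *m y = u.
    apply/matrixP => s z; rewrite [z]ord1 !mxE /Bm.
    transitivity (\sum_x (s == idx (bits_rv x *m Gam))%:R * u (idx (bits_rv x *m Gam)) 0).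
      by apply: eq_bigr => x _; rewrite !mxE.
    case: (eqVneq (u s 0) 0) => [h0|hnz].
      rewrite h0 big1 // => x _; case: eqP => [<-|_]; first by rewrite h0 mulr0.
      by rewrite mul0r.
    have [x0 hx0] := hz s hnz.
    rewrite (bigD1 x0) //= -hx0 eqxx mul1r big1 ?addr0 // => x hx.
    rewrite hx0; case: eqP => [/idx_inj /hinj e|_]; last by rewrite mul0r.
    by move: hx; rewrite e eqxx.
  exists (adjmx C *m y).
  rewrite hvu -hBy -!mulmxA (mulmxA C) unitaryC // mul1mx.
  done.
Qed.
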